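(* Let $D\subset\mathbb{C}^n$ be a bounded homogeneous domain with $0\in D$, let $\mu:D\to(0,\infty)$ be a weight, let $\psi\in H(D)$ and let $\varphi$ be a holomorphic self-map of $D$. Let $W_{\psi,\varphi}f=\psi\,(f\circ\varphi)$. Then: (a) $W_{\psi,\varphi}:\mathcal{B}(D)\to H^\infty_\mu(D)$ is bounded if and only if $\psi\in H^\infty_\mu(D)$ and $\upsilon_\mu(\psi,\varphi)=\sup_{z\in D}\mu(z)|\psi(z)|\,\omega(\varphi(z))$ is finite; moreover, if it is bounded, then $\|W_{\psi,\varphi}\|=\max\{\|\psi\|_{H^\infty_\mu},\upsilon_\mu(\psi,\varphi)\}$. (b) $W_{\psi,\varphi}:\mathcal{B}_{0*}(D)\to H^\infty_\mu(D)$ is bounded if and only if $\psi\in H^\infty_\mu(D)$ and $\upsilon_{0,\mu}(\psi,\varphi)=\sup_{z\in D}\mu(z)|\psi(z)|\,\omega_0(\varphi(z))$ is finite; moreover, if it is bounded, then $\|W_{\psi,\varphi}\|=\max\{\|\psi\|_{H^\infty_\mu},\upsilon_{0,\mu}(\psi,\varphi)\}$.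
   Context: $H(D)$ denotes the holomorphic functions $D\to\mathbb{C}$. A domain is homogeneous if its group of biholomorphic automorphisms acts transitively. A weight is a continuous strictly positive function $\mu:D\to(0,\infty)$; $H^\infty_\mu(D)=\{f\in H(D):\|f\|_{H^\infty_\mu}=\sup_{z\in D}\mu(z)|f(z)|<\infty\}$. For $f\in H(D)$ and $z\in D$, $Q_f(z)=\sup_{u\in\mathbb{C}^n\setminus\{0\}}\frac{|\nabla f(z)u|}{H_z(u,\bar u)^{1/2}}$, where $\nabla f(z)u=\sum_k \frac{\partial f}{\partial z_k}(z)u_k$ and $H_z$ is the Bergman metric of $D$ at $z$. The Bloch space is $\mathcal{B}(D)=\{f\in H(D):\beta_f=\sup_{z\in D}Q_f(z)<\infty\}$ with norm $\|f\|_{\mathcal{B}}=|f(0)|+\beta_f$. The $*$-little Bloch space is $\mathcal{B}_{0*}(D)=\{f\in\mathcal{B}(D):\lim_{z\to\partial^* D}Q_f(z)=0\}$ (with the Bloch norm), where $\partial^*D$ is the distinguished boundary of $D$. For $z\in D$: $\omega(z)=\sup\{|f(z)|: f\in\mathcal{B}(D), f(0)=0, \|f\|_{\mathcal{B}}\le 1\}$ and $\omega_0(z)=\sup\{|f(z)|: f\in\mathcal{B}_{0*}(D), f(0)=0, \|f\|_{\mathcal{B}}\le 1\}$. *)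

(* Defs.v *)
(* All topological notions on C^n are written out by hand (epsilon-delta with
   the Euclidean norm), since R[i] carries no normed-space instance. *)
From HB Require Import structures.
From mathcomp Require Import all_boot all_order all_algebra.
From mathcomp Require Import all_classical all_reals all_analysis.
From mathcomp Require Import complex.

Set Implicit Arguments.
Unset Strict Implicit.
Unset Printing Implicit Defensive.
Import Order.TTheory GRing.Theory Num.Theory.
Import numFieldNormedType.Exports.
Local Open Scope classical_set_scope.
Local Open Scope ring_scope.

Section ComplexSCV.
Variable R : realType.
Local Notation C := R[i].
Variable n : nat.
Local Notation Cn := 'rV[C]_n.

Definition cabs (c : C) : R := Num.sqrt (complex.Re c ^+ 2 + complex.Im c ^+ 2).

Definition vnorm (z : Cn) : R := Num.sqrt (\sum_(k < n) cabs (z 0 k) ^+ 2).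

Definition rC (t : R) : C := Complex t 0.

Definition open_set (D : set Cn) : Prop :=
  forall z, D z -> exists r : R, 0 < r /\ forall w, vnorm (w - z) < r -> D w.

Definition closure_set (S : set Cn) : set Cn :=
  [set z | forall e : R, 0 < e -> exists w, S w /\ vnorm (w - z) < e].

Definition closed_set (S : set Cn) : Prop := closure_set S `<=` S.

Definition connected_set (D : set Cn) : Prop :=
  forall U V : set Cn, open_set U -> open_set V -> D `<=` U `|` V ->
    (D `&` U) !=set0 -> (D `&` V) !=set0 -> (D `&` U `&` V) !=set0.

Definition domain (D : set Cn) : Prop :=
  open_set D /\ D !=set0 /\ connected_set D.

Definition cbounded_set (D : set Cn) : Prop :=
  exists M : R, forall z, D z -> vnorm z <= M.

Definition continuous_on_R (S : set Cn) (g : Cn -> R) : Prop :=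
  forall z, S z -> forall e : R, 0 < e -> exists d : R, 0 < d /\
    forall w, S w -> vnorm (w - z) < d -> `|g w - g z| < e.

Definition continuous_on_C (S : set Cn) (f : Cn -> C) : Prop :=
  forall z, S z -> forall e : R, 0 < e -> exists d : R, 0 < d /\
    forall w, S w -> vnorm (w - z) < d -> cabs (f w - f z) < e.

Definition cderiv_at (f : Cn -> C) (z : Cn) (a : Cn) : Prop :=
  forall e : R, 0 < e -> exists d : R, 0 < d /\
    forall h : Cn, vnorm h < d ->
      cabs (f (z + h) - f z - \sum_(k < n) a 0 k * h 0 k) <= e * vnorm h.

(* f is holomorphic on D (f in H(D); values outside D are irrelevant) *)
Definition holo_on (D : set Cn) (f : Cn -> C) : Prop :=
  forall z, D z -> exists a, cderiv_at f z a.

Definition grad (f : Cn -> C) (z : Cn) : Cn := xget 0 (cderiv_at f z).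

Definition nablaf (f : Cn -> C) (z u : Cn) : C :=
  \sum_(k < n) grad f z 0 k * u 0 k.

Definition holo_map (D : set Cn) (F : Cn -> Cn) : Prop :=
  forall k : 'I_n, holo_on D (fun z => F z 0 k).

Definition holo_self_map (D : set Cn) (phi : Cn -> Cn) : Prop :=
  holo_map D phi /\ (forall z, D z -> D (phi z)).

Definition automorphism (D : set Cn) (F : Cn -> Cn) : Prop :=
  holo_self_map D F /\ exists G, holo_self_map D G /\
    (forall z, D z -> G (F z) = z) /\ (forall z, D z -> F (G z) = z).

Definition homogeneous (D : set Cn) : Prop :=
  forall z w, D z -> D w -> exists F, automorphism D F /\ F z = w.

(* iterated Lebesgue integral over R^m of a nonnegative function of the
   coordinates x_0, ..., x_(m-1) (coordinates >= m are set to 0) *)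
Fixpoint iint (m : nat) (g : (nat -> R) -> \bar R) : \bar R :=
  match m with
  | 0 => g (fun _ => 0)
  | m'.+1 => (\int[@lebesgue_measure R]_t
                 iint m' (fun x => g (fun k => if k == m' then t else x k)))%E
  end.

Definition embedC (x : nat -> R) : Cn :=
  \row_(k < n) Complex (x (k.*2)%N) (x (k.*2.+1)%N).

Definition L2sq (D : set Cn) (f : Cn -> C) : \bar R :=
  iint (n.*2)%N (fun x => if `[< D (embedC x) >]
                          then ((cabs (f (embedC x))) ^+ 2)%:E else 0%E).

Definition bergman_ball (D : set Cn) : set (Cn -> C) :=
  [set f | holo_on D f /\ (L2sq D f <= 1)%E].

(* Bergman kernel on the diagonal:
   K(z,z) = sup { |f(z)|^2 : f in A^2(D), ||f||_2 <= 1 } *)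
Definition bergman_kernel_diag (D : set Cn) (z : Cn) : R :=
  sup [set cabs (f z) ^+ 2 | f in bergman_ball D].

Definition rdir (v : Cn) (g : Cn -> R) (z : Cn) : R :=
  lim ((fun t : R => (g (z + rC t *: v) - g z) / t) @ (0 : R)^').

(* Bergman metric H_z(u, ubar) = sum_{j,k} d^2 log K(z,z)/dz_j dzbar_k u_j ubar_k,
   written via the identity  sum_{j,k} g_{j kbar} u_j ubar_k
        = 1/4 (D_u D_u g + D_{iu} D_{iu} g)(z)   (real directional derivatives) *)
Definition bergman_metric (D : set Cn) (z u : Cn) : R :=
  let g := fun w => ln (bergman_kernel_diag D w) in
  let iu := Complex 0 1 *: u in
  (rdir u (rdir u g) z + rdir iu (rdir iu g) z) / 4.

Definition Qf (D : set Cn) (f : Cn -> C) (z : Cn) : \bar R :=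
  ereal_sup [set (cabs (nablaf f z u) / Num.sqrt (bergman_metric D z u))%:E
            | u in [set u : Cn | u != 0]].

Definition beta (D : set Cn) (f : Cn -> C) : \bar R :=
  ereal_sup [set Qf D f z | z in D].

Definition bloch_norm (D : set Cn) (f : Cn -> C) : \bar R :=
  ((cabs (f 0))%:E + beta D f)%E.

Definition bloch (D : set Cn) : set (Cn -> C) :=
  [set f | holo_on D f /\ (beta D f < +oo)%E].

(* Shilov (distinguished) boundary: intersection of all closed subsets S of
   the closure of D on which every f in A(D) (continuous on cl D, holomorphic
   on D) attains the sup of |f| over cl D *)
Definition disc_alg (D : set Cn) : set (Cn -> C) :=
  [set f | continuous_on_C (closure_set D) f /\ holo_on D f].

Definition boundary_for (D S : set Cn) : Prop :=
  S `<=` closure_set D /\ closed_set S /\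
  forall f, disc_alg D f ->
    (ereal_sup [set (cabs (f w))%:E | w in closure_set D]
      <= ereal_sup [set (cabs (f w))%:E | w in S])%E.

Definition distinguished_boundary (D : set Cn) : set Cn :=
  [set z | forall S, boundary_for D S -> S z].

Definition vanishes_at_dboundary (D : set Cn) (f : Cn -> C) : Prop :=
  forall e : R, 0 < e -> exists d : R, 0 < d /\
    forall z, D z -> (exists xi, distinguished_boundary D xi /\ vnorm (z - xi) < d) ->
      (Qf D f z < e%:E)%E.

Definition little_bloch (D : set Cn) : set (Cn -> C) :=
  [set f | bloch D f /\ vanishes_at_dboundary D f].

Definition omega (D : set Cn) (z : Cn) : \bar R :=
  ereal_sup [set (cabs (f z))%:E
            | f in [set f | bloch D f /\ f 0 = 0 /\ (bloch_norm D f <= 1)%E]].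

Definition omega0 (D : set Cn) (z : Cn) : \bar R :=
  ereal_sup [set (cabs (f z))%:E
            | f in [set f | little_bloch D f /\ f 0 = 0 /\ (bloch_norm D f <= 1)%E]].

Definition weight (D : set Cn) (mu : Cn -> R) : Prop :=
  continuous_on_R D mu /\ (forall z, D z -> 0 < mu z).

Definition Hinf_norm (D : set Cn) (mu : Cn -> R) (f : Cn -> C) : \bar R :=
  ereal_sup [set (mu z * cabs (f z))%:E | z in D].

Definition Hinf (D : set Cn) (mu : Cn -> R) : set (Cn -> C) :=
  [set f | holo_on D f /\ (Hinf_norm D mu f < +oo)%E].

Definition Wop (psi : Cn -> C) (phi : Cn -> Cn) (f : Cn -> C) : Cn -> C :=
  fun z => psi z * f (phi z).

Definition Wbounded (D : set Cn) (X : set (Cn -> C)) (mu : Cn -> R)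
    (psi : Cn -> C) (phi : Cn -> Cn) : Prop :=
  (forall f, X f -> Hinf D mu (Wop psi phi f)) /\
  exists M : R, forall f, X f ->
    (Hinf_norm D mu (Wop psi phi f) <= M%:E * bloch_norm D f)%E.

Definition Wnorm (D : set Cn) (X : set (Cn -> C)) (mu : Cn -> R)
    (psi : Cn -> C) (phi : Cn -> Cn) : \bar R :=
  ereal_sup [set Hinf_norm D mu (Wop psi phi f)
            | f in [set f | X f /\ (bloch_norm D f <= 1)%E]].

Definition upsilon (D : set Cn) (mu : Cn -> R) (psi : Cn -> C) (phi : Cn -> Cn)
  : \bar R :=
  ereal_sup [set ((mu z * cabs (psi z))%:E * omega D (phi z))%E | z in D].

Definition upsilon0 (D : set Cn) (mu : Cn -> R) (psi : Cn -> C) (phi : Cn -> Cn)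
  : \bar R :=
  ereal_sup [set ((mu z * cabs (psi z))%:E * omega0 D (phi z))%E | z in D].

End ComplexSCV.

(* Main.v *)
Require Import Defs.
From HB Require Import structures.
From mathcomp Require Import all_boot all_order all_algebra.
From mathcomp Require Import all_classical all_reals all_analysis.
From mathcomp Require Import complex.
From mathcomp Require Import ring lra.
Import Order.TTheory GRing.Theory Num.Theory.
Local Open Scope classical_set_scope.
Local Open Scope ring_scope.

Section Aux.
Variable R : realType.
Local Notation C := R[i].
Variable n : nat.
Local Notation Cn := 'rV[C]_n.

Lemma cabsE (z : C) : ((cabs z)%:C)%C = `|z|.
Proof. by rewrite normc_def. Qed.

Lemma cabs_ge0 (z : C) : 0 <= cabs z.
Proof. exact: sqrtr_ge0. Qed.

Lemma cabsM (x y : C) : cabs (x * y) = cabs x * cabs y.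
Proof. by apply: complexI; rewrite rmorphM /= !cabsE normrM. Qed.

Lemma cabsD (x y : C) : cabs (x + y) <= cabs x + cabs y.
Proof. by rewrite -lecR rmorphD /= !cabsE ler_normD. Qed.

Lemma cabsN (x : C) : cabs (- x) = cabs x.
Proof. by apply: complexI; rewrite !cabsE normrN. Qed.

Lemma cabs0 : cabs (0 : C) = 0.
Proof. by apply: complexI; rewrite !cabsE normr0. Qed.

Lemma cabs1 : cabs (1 : C) = 1.
Proof. by apply: complexI; rewrite !cabsE normr1. Qed.

Lemma cabs_rC (t : R) : cabs (rC t) = `|t|.
Proof. by rewrite /cabs /rC /= expr0n addr0 sqrtr_sqr. Qed.

Lemma cabs_eq0 (x : C) : cabs x = 0 -> x = 0.
Proof. by move=> h; apply/eqP; rewrite -normr_eq0 -cabsE h. Qed.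

Lemma cabs_sum (I : finType) (F : I -> C) :
  cabs (\sum_k F k) <= \sum_k cabs (F k).
Proof.
rewrite -lecR cabsE rmorph_sum; apply: le_trans (ler_norm_sum _ _ _) _.
by apply: ler_sum => i _; rewrite -cabsE.
Qed.

Lemma cabsB (x y : C) : cabs (x - y) = cabs (y - x).
Proof. by rewrite -cabsN opprB. Qed.

Lemma vnorm_ge0 (h : Cn) : 0 <= vnorm h.
Proof. exact: sqrtr_ge0. Qed.

Lemma cabs_le_vnorm (h : Cn) k : cabs (h 0 k) <= vnorm h.
Proof.
have -> : cabs (h 0 k) = Num.sqrt (cabs (h 0 k) ^+ 2).
  by rewrite sqrtr_sqr ger0_norm // cabs_ge0.
rewrite /vnorm.
rewrite ler_sqrt; last by apply: sumr_ge0 => i _; rewrite sqr_ge0.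
rewrite (bigD1 k) //= lerDl; apply: sumr_ge0 => i _; exact: sqr_ge0.
Qed.

Lemma vnorm_le_sum (h : Cn) : vnorm h <= \sum_k cabs (h 0 k).
Proof.
have S0 : 0 <= \sum_k cabs (h 0 k) by apply: sumr_ge0 => i _; exact: cabs_ge0.
have -> : \sum_k cabs (h 0 k) = Num.sqrt ((\sum_k cabs (h 0 k)) ^+ 2).
  by rewrite sqrtr_sqr ger0_norm.
rewrite /vnorm ler_sqrt ?sqr_ge0 //.
rewrite expr2 big_distrl /=; apply: ler_sum => i _.
rewrite expr2 ler_wpM2l ?cabs_ge0 //.
by rewrite (bigD1 i) //= lerDl; apply: sumr_ge0 => j _; exact: cabs_ge0.
Qed.

Lemma sum_bound (a h : Cn) :
  cabs (\sum_k a 0 k * h 0 k) <= (\sum_k cabs (a 0 k)) * vnorm h.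
Proof.
apply: le_trans (cabs_sum _ _) _; rewrite big_distrl /=; apply: ler_sum => k _.
by rewrite cabsM ler_wpM2l ?cabs_ge0 ?cabs_le_vnorm.
Qed.

Definition ev (j : 'I_n) (t : R) : Cn := \row_k (if k == j then rC t else 0).

Lemma sum_single (V : nmodType) (F : 'I_n -> V) j :
  \sum_k (if k == j then F k else 0) = F j.
Proof. by rewrite (bigD1 j) //= eqxx big1 ?addr0 // => k /negbTE ->. Qed.

Lemma vnorm_ev j t : 0 <= t -> vnorm (ev j t) = t.
Proof.
move=> t0; rewrite /vnorm.
under eq_bigr do rewrite mxE (fun_if (fun x => cabs x ^+ 2)) cabs0 expr0n /=.
by rewrite (sum_single _ (fun _ => cabs (rC t) ^+ 2)) cabs_rC sqrtr_sqr ger0_norm // ger0_norm.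
Qed.

Lemma sum_ev (a : Cn) j t : \sum_k a 0 k * ev j t 0 k = a 0 j * rC t.
Proof.
under eq_bigr do rewrite mxE (fun_if (fun x => a 0 _ * x)) mulr0.
exact: (sum_single _ (fun k => a 0 k * rC t)).
Qed.

Lemma cderiv_unique {f : Cn -> C} {z : Cn} {a b : Cn} :
  cderiv_at f z a -> cderiv_at f z b -> a = b.
Proof.
move=> Ha Hb; apply/rowP => j.
set x := cabs (a 0 j - b 0 j).
have x0 : 0 <= x by exact: cabs_ge0.
suff : x = 0 by move/cabs_eq0/eqP; rewrite subr_eq0 => /eqP.
apply/eqP; rewrite eq_le x0 andbT; apply/negP => /negP; rewrite -ltNge => xp.
have e0 : 0 < x / 4 by rewrite divr_gt0.
have [d1 [d1p H1]] := Ha _ e0; have [d2 [d2p H2]] := Hb _ e0.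
set t := Num.min d1 d2 / 2.
have tp : 0 < t by rewrite divr_gt0 // lt_min d1p.
have vt : vnorm (ev j t) = t by rewrite vnorm_ev // ltW.
have tm : t < Num.min d1 d2.
  by rewrite /t ltr_pdivrMr // ltr_pMr ?lt_min ?d1p ?d2p // ltr1n.
have td1 : t < d1 by apply: lt_le_trans tm _; rewrite ge_min lexx.
have td2 : t < d2 by apply: lt_le_trans tm _; rewrite ge_min lexx orbT.
have := H1 (ev j t); rewrite vt => /(_ td1) h1.
have := H2 (ev j t); rewrite vt => /(_ td2) h2.
have : x * t <= x / 4 * t + x / 4 * t.
  set A := f (z + ev j t) - f z - \sum_k b 0 k * ev j t 0 k in h2.
  set B := f (z + ev j t) - f z - \sum_k a 0 k * ev j t 0 k in h1.
  have E : x * t = cabs (A + - B).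
    rewrite /x -(ger0_norm (ltW tp)) -cabs_rC -cabsM; congr cabs.
    rewrite /A /B !sum_ev; ring.
  rewrite E; apply: le_trans (cabsD _ _) _; rewrite cabsN; exact: lerD h2 h1.
rewrite -mulrDl ler_pM2r // => h; lra.
Qed.

Lemma eq_ler (x y : R) : x = y -> x <= y. Proof. by move->. Qed.

Definition smallR (g : Cn -> R) := forall e : R, 0 < e -> exists d : R, 0 < d /\
  forall h, vnorm h < d -> g h <= e * vnorm h.
Definition lipR (g : Cn -> R) := exists K d : R, 0 <= K /\ 0 < d /\
  forall h, vnorm h < d -> g h <= K * vnorm h.

Lemma smallR_le {g1 g2 : Cn -> R} : (forall h, g1 h <= g2 h) -> smallR g2 -> smallR g1.
Proof.
move=> le H e e0; have [d [d0 Hd]] := H e e0; exists d; split => // h hd.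
exact: le_trans (le h) (Hd h hd).
Qed.

Lemma lipR_le {g1 g2 : Cn -> R} : (forall h, g1 h <= g2 h) -> lipR g2 -> lipR g1.
Proof.
move=> le [K [d [K0 [d0 Hd]]]]; exists K, d; split => //; split => // h hd.
exact: le_trans (le h) (Hd h hd).
Qed.

Lemma smallR0 : smallR (fun _ => 0).
Proof.
move=> e e0; exists 1; split => // h _; apply: mulr_ge0; [exact: ltW|exact: vnorm_ge0].
Qed.

Lemma lipR0 : lipR (fun _ => 0).
Proof. exists 0, 1; split => //; split => // h _; by rewrite mul0r. Qed.

Lemma smallR_add {g1 g2 : Cn -> R} : smallR g1 -> smallR g2 -> smallR (fun h => g1 h + g2 h).
Proof.
move=> H1 H2 e e0; have e2 : 0 < e / 2 by rewrite divr_gt0.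
have [d1 [d10 Hd1]] := H1 _ e2; have [d2 [d20 Hd2]] := H2 _ e2.
exists (Num.min d1 d2); split; first by rewrite lt_min d10.
move=> h; rewrite lt_min => /andP [h1 h2].
apply: le_trans (lerD (Hd1 h h1) (Hd2 h h2)) _.
by rewrite -mulrDl -splitr.
Qed.

Lemma lipR_add {g1 g2 : Cn -> R} : lipR g1 -> lipR g2 -> lipR (fun h => g1 h + g2 h).
Proof.
move=> [K1 [d1 [K10 [d10 Hd1]]]] [K2 [d2 [K20 [d20 Hd2]]]].
exists (K1 + K2), (Num.min d1 d2); split; first by rewrite addr_ge0.
split; first by rewrite lt_min d10.
move=> h; rewrite lt_min => /andP [h1 h2].
by apply: le_trans (lerD (Hd1 h h1) (Hd2 h h2)) _; rewrite -mulrDl.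
Qed.

Lemma smallR_sum (I : eqType) (s : seq I) (g : I -> Cn -> R) :
  (forall j, smallR (g j)) -> smallR (fun h => \sum_(j <- s) g j h).
Proof.
move=> H; elim: s => [|j s IH].
  by apply: (smallR_le _ smallR0) => h; rewrite big_nil.
by apply: smallR_le (smallR_add (H j) IH) => h; rewrite big_cons.
Qed.

Lemma lipR_sum (I : eqType) (s : seq I) (g : I -> Cn -> R) :
  (forall j, lipR (g j)) -> lipR (fun h => \sum_(j <- s) g j h).
Proof.
move=> H; elim: s => [|j s IH].
  by apply: (lipR_le _ lipR0) => h; rewrite big_nil.
by apply: lipR_le (lipR_add (H j) IH) => h; rewrite big_cons.
Qed.

Lemma smallR_scale (c : R) {g : Cn -> R} : 0 <= c -> smallR g -> smallR (fun h => c * g h).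
Proof.
move=> c0 H e e0; have e1 : 0 < e / (c + 1) by rewrite divr_gt0 // ltr_wpDl.
have [d [d0 Hd]] := H _ e1; exists d; split => // h hd.
apply: le_trans (ler_wpM2l c0 (Hd h hd)) _.
rewrite mulrA ler_wpM2r ?vnorm_ge0 // mulrC -mulrA ger_pMr //.
by rewrite mulrC ler_pdivrMr ?mul1r ?lerDl // ltr_wpDl.
Qed.

Lemma smallR_lipR {g : Cn -> R} : smallR g -> lipR g.
Proof.
move=> H; have [d [d0 Hd]] := H 1 ltr01; exists 1, d; split => //.
Qed.

Lemma smallR_mul {g1 g2 : Cn -> R} : (forall h, 0 <= g1 h) -> (forall h, 0 <= g2 h) ->
  lipR g1 -> lipR g2 -> smallR (fun h => g1 h * g2 h).
Proof.
move=> p1 p2 [K1 [d1 [K10 [d10 Hd1]]]] [K2 [d2 [K20 [d20 Hd2]]]] e e0.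
set P := K1 * K2.
have P0 : 0 <= P by rewrite mulr_ge0.
have e1 : 0 < e / (P + 1) by rewrite divr_gt0 // ltr_wpDl.
exists (Num.min (Num.min d1 d2) (e / (P + 1))); split.
  by rewrite !lt_min d10 d20 e1.
move=> h; rewrite !lt_min => /andP [/andP [h1 h2] h3].
apply: le_trans (ler_pM (p1 h) (p2 h) (Hd1 h h1) (Hd2 h h2)) _.
have v0 := vnorm_ge0 h.
have hP : P * vnorm h <= e.
  rewrite ltr_pdivlMr ?ltr_wpDl // in h3.
  apply: le_trans (ltW h3); rewrite mulrC ler_wpM2l // lerDl //.
have -> : K1 * vnorm h * (K2 * vnorm h) = (P * vnorm h) * vnorm h by rewrite /P; ring.
by rewrite ler_wpM2r.
Qed.

Lemma smallR_comp {g : Cn -> R} {k : Cn -> Cn} :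
  smallR g -> lipR (fun h => vnorm (k h)) -> smallR (fun h => g (k h)).
Proof.
move=> H [K [d1 [K0 [d10 Hd1]]]] e e0.
have e1 : 0 < e / (K + 1) by rewrite divr_gt0 // ltr_wpDl.
have [d2 [d20 Hd2]] := H _ e1.
have d3 : 0 < d2 / (K + 1) by rewrite divr_gt0 // ltr_wpDl.
exists (Num.min d1 (d2 / (K + 1))); split; first by rewrite lt_min d10.
move=> h; rewrite lt_min => /andP [h1 h2].
have v0 := vnorm_ge0 h.
have kh := Hd1 h h1.
have kd : vnorm (k h) < d2.
  apply: le_lt_trans kh _; rewrite ltr_pdivlMr ?ltr_wpDl // in h2.
  apply: le_lt_trans h2; nra.
apply: le_trans (Hd2 _ kd) _.
apply: le_trans (ler_wpM2l (ltW e1) kh) _.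
have -> : e / (K + 1) * (K * vnorm h) = (e * vnorm h) * (K / (K + 1)) by ring.
apply: ler_piMr; first by rewrite mulr_ge0 // ltW.
by rewrite ler_pdivrMr ?mul1r ?lerDl // ltr_wpDl.
Qed.

Lemma cderivS {f : Cn -> C} {z a : Cn} : cderiv_at f z a ->
  smallR (fun h => cabs (f (z + h) - f z - \sum_k a 0 k * h 0 k)).
Proof. by []. Qed.

Lemma Scderiv {f : Cn -> C} {z a : Cn} :
  smallR (fun h => cabs (f (z + h) - f z - \sum_k a 0 k * h 0 k)) -> cderiv_at f z a.
Proof. by []. Qed.

Lemma lin_lip (a : Cn) : lipR (fun h => cabs (\sum_k a 0 k * h 0 k)).
Proof.
exists (\sum_k cabs (a 0 k)), 1; split; first by apply: sumr_ge0 => k _; exact: cabs_ge0.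
by split => // h _; exact: sum_bound.
Qed.

Lemma cderiv_lip {f : Cn -> C} {z : Cn} {a : Cn} : cderiv_at f z a -> lipR (fun h => cabs (f (z + h) - f z)).
Proof.
move=> /cderivS H; apply: (lipR_le _ (lipR_add (smallR_lipR H) (lin_lip a))) => h /=.
set S := \sum_k _.
by apply: le_trans (cabsD _ _); rewrite subrK.
Qed.

Lemma cderiv_const (c : C) (z : Cn) : cderiv_at (fun _ => c) z 0.
Proof.
apply: Scderiv; apply: (smallR_le _ smallR0) => h /=.
by rewrite subrr big1 ?subr0 ?cabs0 // => k _; rewrite mxE mul0r.
Qed.

Lemma cderiv_affine (f : Cn -> C) (z : Cn) (a : Cn) (k d : C) :
  cderiv_at f z a -> cderiv_at (fun w => k * (f w - d)) z (k *: a).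
Proof.
move=> /cderivS H; apply: Scderiv. apply: (smallR_le _ (smallR_scale _ (cabs_ge0 k) H)) => h /=.
rewrite -cabsM; apply: eq_ler; congr cabs.
under eq_bigr do rewrite mxE -mulrA.
rewrite -mulr_sumr; ring.
Qed.

Lemma cderiv_mul (f g : Cn -> C) (z : Cn) (a b : Cn) : cderiv_at f z a -> cderiv_at g z b ->
  cderiv_at (fun w => f w * g w) z (f z *: b + g z *: a).
Proof.
move=> Ha Hb.
have S := smallR_add (smallR_add (smallR_scale _ (cabs_ge0 (f z)) (cderivS Hb))
   (smallR_scale _ (cabs_ge0 (g z)) (cderivS Ha)))
   (smallR_mul (fun h => cabs_ge0 _) (fun h => cabs_ge0 _) (cderiv_lip Ha) (cderiv_lip Hb)).
apply: Scderiv; apply: (smallR_le _ S) => h /=.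
set Sa := \sum_k a 0 k * h 0 k; set Sb := \sum_k b 0 k * h 0 k.
have -> : \sum_k (f z *: b + g z *: a) 0 k * h 0 k = f z * Sb + g z * Sa.
  rewrite /Sa /Sb !mulr_sumr -big_split /=; apply: eq_bigr => k _.
  by rewrite !mxE; ring.
have -> : f (z + h) * g (z + h) - f z * g z - (f z * Sb + g z * Sa) =
  (f z * (g (z + h) - g z - Sb) + g z * (f (z + h) - f z - Sa)) +
  (f (z + h) - f z) * (g (z + h) - g z) by ring.
rewrite -!cabsM; apply: le_trans (cabsD _ _) _; apply: lerD; last exact: lexx.
exact: cabsD.
Qed.

Lemma cderiv_comp (F : Cn -> C) (G : Cn -> Cn) (z a : Cn) (B : 'I_n -> Cn) :
  cderiv_at F (G z) a -> (forall j, cderiv_at (fun w => G w 0 j) z (B j)) ->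
  cderiv_at (fun w => F (G w)) z (\row_k \sum_j a 0 j * B j 0 k).
Proof.
move=> /cderivS HF HG.
pose kk := fun h => G (z + h) - G z.
have L1 := lipR_sum _ (index_enum 'I_n) _ (fun j => cderiv_lip (HG j)).
have Lk : lipR (fun h => vnorm (kk h)).
  apply: (lipR_le _ L1) => h /=; apply: le_trans (vnorm_le_sum _) _.
  by apply: eq_ler; apply: eq_bigr => j _; rewrite /kk !mxE.
have S1 := smallR_comp HF Lk.
have S2 := smallR_sum _ (index_enum 'I_n) _
  (fun j => smallR_scale _ (cabs_ge0 (a 0 j)) (cderivS (HG j))).
apply: Scderiv; apply: (smallR_le _ (smallR_add S1 S2)) => h /=.
have -> : G z + kk h = G (z + h) by rewrite /kk addrC subrK.
set r := fun j => G (z + h) 0 j - G z 0 j - \sum_k B j 0 k * h 0 k.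
have E1 : \sum_j a 0 j * r j =
    \sum_j a 0 j * kk h 0 j - \sum_k (\row_k \sum_j a 0 j * B j 0 k) 0 k * h 0 k.
  have -> : \sum_k (\row_k \sum_j a 0 j * B j 0 k) 0 k * h 0 k =
            \sum_j a 0 j * \sum_k B j 0 k * h 0 k.
    under eq_bigr do rewrite mxE big_distrl /=.
    rewrite exchange_big /=; apply: eq_bigr => j _.
    by rewrite mulr_sumr; apply: eq_bigr => k _; rewrite mulrA.
  rewrite -sumrB; apply: eq_bigr => j _.
  by rewrite /r /kk !mxE; ring.
set P := F (G (z + h)) - F (G z) - \sum_k a 0 k * kk h 0 k.
have -> : F (G (z + h)) - F (G z) - \sum_k (\row_k \sum_j a 0 j * B j 0 k) 0 k * h 0 k
   = P + \sum_j a 0 j * r j by rewrite E1 /P; ring.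
apply: le_trans (cabsD _ _) _; apply: lerD; first exact: lexx.
apply: le_trans (cabs_sum _ _) _; apply: eq_ler; apply: eq_bigr => j _.
by rewrite cabsM.
Qed.

Lemma grad_spec {f : Cn -> C} {z : Cn} :
  (exists a, cderiv_at f z a) -> cderiv_at f z (grad f z).
Proof. by move=> H; apply: xgetPex. Qed.

Lemma grad_affine (f : Cn -> C) (z : Cn) (k d : C) :
  (exists a, cderiv_at f z a) ->
  grad (fun w => k * (f w - d)) z = k *: grad f z.
Proof.
move=> H; have Hf := grad_spec H.
have Hg := cderiv_affine _ _ _ k d Hf.
exact: (cderiv_unique (grad_spec (ex_intro _ _ Hg)) Hg).
Qed.

Lemma grad_const (c : C) (z : Cn) : grad (fun _ => c) z = 0.
Proof.
have Hc := cderiv_const c z.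
exact: (cderiv_unique (grad_spec (ex_intro _ _ Hc)) Hc).
Qed.


Lemma Qf_const (D : set Cn) (c : C) (z : Cn) : (Qf D (fun _ => c) z <= 0)%E.
Proof.
apply: ge_ereal_sup => _ [u _ <-].
rewrite /nablaf grad_const big1 ?cabs0 ?mul0r // => k _.
by rewrite mxE mul0r.
Qed.

Lemma beta_const (D : set Cn) (c : C) : (beta D (fun _ => c) <= 0)%E.
Proof. by apply: ge_ereal_sup => _ [z _ <-]; exact: Qf_const. Qed.

Lemma Qf_affine (D : set Cn) (f : Cn -> C) (z : Cn) (c : R) : (0 < c)%R ->
  (exists a, cderiv_at f z a) ->
  (Qf D (fun w => (rC c * (f w - f 0))%R) z <= c%:E * Qf D f z)%E.
Proof.
move=> c0 H; apply: ge_ereal_sup => _ [u u0 <-].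
rewrite /nablaf grad_affine //.
have -> : \sum_k (rC c *: grad f z) 0 k * u 0 k = rC c * \sum_k grad f z 0 k * u 0 k.
  by rewrite mulr_sumr; apply: eq_bigr => k _; rewrite mxE mulrA.
rewrite cabsM cabs_rC gtr0_norm // -mulrA EFinM.
apply: lee_wpmul2l; first by rewrite lee_fin ltW.
by apply: ereal_sup_ubound; exists u.
Qed.

Lemma Qf_ge0 (D : set Cn) (f : Cn -> C) (z : Cn) : (0 < n)%N -> (0 <= Qf D f z)%E.
Proof.
move=> n0; apply: le_trans (ereal_sup_ubound _); last first.
  exists (const_mx 1) => //.
  apply/negP => /eqP /matrixP /(_ 0 (Ordinal n0)); rewrite !mxE => /eqP.
  by rewrite oner_eq0.
by rewrite lee_fin divr_ge0 ?cabs_ge0 ?sqrtr_ge0.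
Qed.

Lemma beta_ge0 (D : set Cn) (f : Cn -> C) : (0 < n)%N -> D 0 -> (0 <= beta D f)%E.
Proof.
move=> n0 D0; apply: le_trans (ereal_sup_ubound _); last by exists 0.
exact: Qf_ge0.
Qed.

Lemma beta_affine (D : set Cn) (f : Cn -> C) (c : R) : (0 < c)%R -> holo_on D f ->
  (beta D (fun w => (rC c * (f w - f 0))%R) <= c%:E * beta D f)%E.
Proof.
move=> c0 Hf; apply: ge_ereal_sup => _ [z Dz <-].
apply: le_trans (Qf_affine D _ _ _ c0 (Hf z Dz)) _.
apply: lee_wpmul2l; first by rewrite lee_fin ltW.
by apply: ereal_sup_ubound; exists z.
Qed.

Lemma holo_affine (D : set Cn) (f : Cn -> C) (k d : C) : holo_on D f ->
  holo_on D (fun w => k * (f w - d)).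
Proof. move=> H z Dz; have [a Ha] := H z Dz; exists (k *: a); exact: cderiv_affine. Qed.

Lemma holo_const (D : set Cn) (c : C) : holo_on D (fun _ => c).
Proof. by move=> z _; exists 0; exact: cderiv_const. Qed.

Lemma holo_Wop (D : set Cn) psi phi (f : Cn -> C) : holo_on D psi -> holo_self_map D phi ->
  holo_on D f -> holo_on D (Wop psi phi f).
Proof.
move=> Hpsi [Hphi Dphi] Hf z Dz.
have [a Ha] := Hpsi z Dz.
have [b Hb] := Hf (phi z) (Dphi z Dz).
have HB : forall j, cderiv_at (fun w => phi w 0 j) z (grad (fun w => phi w 0 j) z).
  by move=> j; apply: grad_spec; exact: Hphi j z Dz.
have Hc := cderiv_comp _ _ _ _ _ Hb HB.
eexists; exact: cderiv_mul _ _ _ _ _ Ha Hc.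
Qed.

Section Main.
Variables (D : set Cn) (mu : Cn -> R) (psi : Cn -> C) (phi : Cn -> Cn).
Variable X : set (Cn -> C).
Hypothesis n0 : (0 < n)%N.
Hypothesis D0 : D 0.
Hypothesis Hmu : forall z, D z -> (0 < mu z)%R.
Hypothesis Hpsi : holo_on D psi.
Hypothesis Hphi : holo_self_map D phi.
Hypothesis HX1 : forall f, X f -> holo_on D f /\ (beta D f < +oo)%E.
Hypothesis HX2 : X (fun _ => 1).
Hypothesis HX3 : forall f (c : R), X f -> (0 < c)%R -> X (fun w => rC c * (f w - f 0)).

Let O (w : Cn) : \bar R := ereal_sup [set (cabs (f w))%:E
  | f in [set f | X f /\ f 0 = 0 /\ (bloch_norm D f <= 1)%E]].
Let Ups : \bar R := ereal_sup [set ((mu z * cabs (psi z))%:E * O (phi z))%E | z in D].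
Let P := Hinf_norm D mu psi.
Let W := Wnorm D X mu psi phi.

Lemma Hinf_norm_ge0 (g : Cn -> C) : (0 <= Hinf_norm D mu g)%E.
Proof.
apply: le_trans (ereal_sup_ubound _); last by exists 0.
by rewrite lee_fin mulr_ge0 ?cabs_ge0 // ltW // Hmu.
Qed.

Lemma L1 : (P <= W)%E.
Proof.
apply: ereal_sup_ubound; exists (fun _ => 1).
  split => //; rewrite /bloch_norm cabs1.
  by apply: le_trans (leeD (lexx _) (beta_const D 1)) _; rewrite adde0.
by congr Hinf_norm; apply/funext => z; rewrite /Wop mulr1.
Qed.

Lemma W_ge0 : (0 <= W)%E.
Proof. exact: le_trans (Hinf_norm_ge0 psi) L1. Qed.

Lemma L2 : (Ups <= W)%E.
Proof.
apply: ge_ereal_sup => _ [z Dz <-].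
set a := (mu z * cabs (psi z))%R.
have a0 : (0 <= a)%R by rewrite mulr_ge0 ?cabs_ge0 // ltW // Hmu.
have [->|ap] := eqVneq a 0%R; first by rewrite mul0e W_ge0.
have ap' : (0 < a)%R by rewrite lt_def ap a0.
have := W_ge0; rewrite /W; case EW : (Wnorm D X mu psi phi) => [w| |]; [move=> w0 | by move=> _; rewrite leey | by rewrite leeNy_eq].
have -> : w%:E = (a%:E * (w / a)%:E)%E by rewrite -EFinM mulrC divfK.
apply: lee_wpmul2l; first by rewrite lee_fin.
apply: ge_ereal_sup => _ [f [Xf [f00 nf]] <-].
rewrite lee_fin ler_pdivlMr // mulrC.
have h1 : ((mu z * cabs (Wop psi phi f z))%:E <= Hinf_norm D mu (Wop psi phi f))%E.
  by apply: ereal_sup_ubound; exists z.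
have h2 : (Hinf_norm D mu (Wop psi phi f) <= W)%E.
  by apply: ereal_sup_ubound; exists f => //; split => //; case: (HX1 Xf).
have := le_trans h1 h2; rewrite /W EW lee_fin /Wop cabsM mulrA.
by [].
Qed.

Lemma O_ge0 w : (0 <= O w)%E.
Proof.
have Hz : X (fun _ => 0).
  have -> : (fun _ : Cn => (0 : C)) = (fun w : Cn => rC 1 * ((1 : C) - 1)).
    by apply/funext => x; rewrite subrr mulr0.
  exact: HX3 HX2 ltr01.
apply: le_trans (ereal_sup_ubound _); last first.
  exists (fun _ => 0) => //; split => //; split => //.
  rewrite /bloch_norm cabs0 add0e; apply: le_trans (beta_const D 0) _.
  by rewrite lee_fin ler01.
by rewrite cabs0.
Qed.

Lemma Ups_ge0 : (0 <= Ups)%E.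
Proof.
apply: le_trans (ereal_sup_ubound _); last by exists 0.
apply: mule_ge0; last exact: O_ge0.
by rewrite lee_fin mulr_ge0 ?cabs_ge0 // ltW // Hmu.
Qed.

Lemma fin_of (x : \bar R) : (0 <= x)%E -> (x < +oo)%E -> x = (fine x)%:E /\ (0 <= fine x)%R.
Proof.
move=> x0 xoo; have xf : x \is a fin_num by rewrite ge0_fin_numE.
by split; [rewrite fineK | rewrite -lee_fin fineK].
Qed.

Lemma bound f p u b : X f -> P = p%:E -> Ups = u%:E -> beta D f = b%:E ->
  (Hinf_norm D mu (Wop psi phi f) <= (p * cabs (f 0) + u * b)%:E)%E.
Proof.
move=> Xf HP HU Hb.
have b0 : (0 <= b)%R by rewrite -lee_fin -Hb beta_ge0.
have u0 : (0 <= u)%R by rewrite -lee_fin -HU Ups_ge0.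
apply: ge_ereal_sup => _ [z Dz <-]; rewrite lee_fin.
set a := (mu z * cabs (psi z))%R.
have a0 : (0 <= a)%R by rewrite mulr_ge0 ?cabs_ge0 // ltW // Hmu.
have ap : (a <= p)%R.
  by rewrite -lee_fin -HP; apply: ereal_sup_ubound; exists z.
have key : forall e, (0 < e)%R -> (a * cabs (f (phi z) - f 0) <= u * (b + e))%R.
  move=> e e0; have be : (0 < b + e)%R by rewrite ltr_wpDl.
  set c := (b + e)^-1; have c0 : (0 < c)%R by rewrite invr_gt0.
  have Xg := HX3 _ _ Xf c0.
  set g := fun w => rC c * (f w - f 0) in Xg.
  have g00 : g 0 = 0 by rewrite /g subrr mulr0.
  have ng : (bloch_norm D g <= 1)%E.
    rewrite /bloch_norm g00 cabs0 add0e.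
    apply: le_trans (beta_affine D f _ c0 (HX1 _ Xf).1) _.
    rewrite Hb -EFinM lee_fin /c mulrC ler_pdivrMr // mul1r lerDl ltW //.
  have hO : ((cabs (g (phi z)))%:E <= O (phi z))%E by apply: ereal_sup_ubound; exists g.
  have hU : ((a%:E * O (phi z)) <= Ups)%E by apply: ereal_sup_ubound; exists z.
  have := le_trans (lee_wpmul2l (a0 : (0 <= a%:E)%E) hO) hU.
  rewrite HU -EFinM lee_fin /g cabsM cabs_rC gtr0_norm // => h.
  have -> : (a * cabs (f (phi z) - f 0) = (a * (c * cabs (f (phi z) - f 0))) * (b + e))%R.
    by rewrite /c; field; rewrite lt0r_neq0.
  by rewrite ler_wpM2r // ltW.
have key2 : (a * cabs (f (phi z) - f 0) <= u * b)%R.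
  apply/ler_addgt0Pr => e e0.
  have u1 : (0 < u + 1)%R by rewrite ltr_wpDl.
  apply: le_trans (key _ (divr_gt0 e0 u1)) _.
  by rewrite mulrDr lerD2l mulrA ler_pdivrMr // [u * e]mulrC ler_wpM2l ?lerDl ?ltW.
rewrite /Wop cabsM mulrA -/a.
have hf : (cabs (f (phi z)) <= cabs (f 0) + cabs (f (phi z) - f 0))%R.
  by apply: le_trans (cabsD _ _); rewrite addrC subrK.
apply: le_trans (ler_wpM2l a0 hf) _.
rewrite mulrDr lerD // ler_wpM2r ?cabs_ge0 //.
Qed.

Lemma normf f : X f -> exists b, beta D f = b%:E /\ (0 <= b)%R /\
  bloch_norm D f = (cabs (f 0) + b)%:E.
Proof.
move=> Xf; have [Hb0 Hb1] := fin_of _ (beta_ge0 D f n0 D0) (HX1 _ Xf).2.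
by exists (fine (beta D f)); split => //; split => //; rewrite /bloch_norm Hb0 EFinD.
Qed.

Lemma fwd : Wbounded D X mu psi phi -> (P < +oo)%E /\ (Ups < +oo)%E.
Proof.
move=> [_ [M HM]].
have WM : (W <= (Num.max M 0)%:E)%E.
  apply: ge_ereal_sup => _ [f [Xf nf] <-]; apply: le_trans (HM f Xf) _.
  have [b [_ [b0 Hn]]] := normf _ Xf.
  rewrite Hn -EFinM lee_fin; rewrite Hn lee_fin in nf.
  have t0 : (0 <= cabs (f 0) + b)%R by rewrite addr_ge0 ?cabs_ge0.
  apply: le_trans (_ : _ <= Num.max M 0 * (cabs (f 0) + b))%R _.
    by rewrite ler_wpM2r // le_max lexx.
  by apply: ler_piMr => //; rewrite le_max lexx orbT.
split.
  exact: le_lt_trans (le_trans L1 WM) (ltry _).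
exact: le_lt_trans (le_trans L2 WM) (ltry _).
Qed.

Lemma upper : (P < +oo)%E -> (Ups < +oo)%E ->
  (W <= maxe P Ups)%E /\ (forall f, X f ->
    (Hinf_norm D mu (Wop psi phi f) <= (Num.max (fine P) (fine Ups))%:E * bloch_norm D f)%E).
Proof.
move=> hP hU.
have [HP p0] := fin_of _ (Hinf_norm_ge0 psi) hP.
have [HU u0] := fin_of _ Ups_ge0 hU.
set p := fine P in HP p0 *; set u := fine Ups in HU u0 *.
have B : forall f, X f -> exists t, bloch_norm D f = t%:E /\ (0 <= t)%R /\
    (Hinf_norm D mu (Wop psi phi f) <= (Num.max p u * t)%:E)%E.
  move=> f Xf; have [b [Hb [b0 Hn]]] := normf _ Xf.
  exists (cabs (f 0) + b); split => //; split; first by rewrite addr_ge0 ?cabs_ge0.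
  apply: le_trans (bound _ _ _ _ Xf HP HU Hb) _; rewrite lee_fin mulrDr.
  by rewrite lerD // ler_wpM2r ?cabs_ge0 // le_max lexx ?orbT.
split.
  have -> : maxe P Ups = (Num.max p u)%:E by rewrite EFin_max -HP -HU.
  apply: ge_ereal_sup => _ [f [Xf nf] <-].
  have [t [Ht [t0 Hf]]] := B f Xf; apply: le_trans Hf _.
  rewrite Ht lee_fin in nf; rewrite lee_fin ler_piMr //.
  by rewrite le_max p0.
move=> f Xf; have [t [Ht [t0 Hf]]] := B f Xf.
by rewrite Ht -EFinM.
Qed.

Lemma main_gen :
  ((Wbounded D X mu psi phi <-> (Hinf D mu psi /\ (Ups < +oo)%E)) /\
   (Wbounded D X mu psi phi -> W = maxe P Ups)).
Proof.
split; first split.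
- move=> Wb; have [hP hU] := fwd Wb; split => //.
- move=> [[_ hP] hU]; have [U1 U2] := upper hP hU; split.
    move=> f Xf; split; first exact: holo_Wop Hpsi Hphi (HX1 _ Xf).1.
    have [b [_ [_ Hn]]] := normf _ Xf.
    by apply: le_lt_trans (U2 f Xf) _; rewrite Hn -EFinM ltry.
  by exists (Num.max (fine P) (fine Ups)).
- move=> Wb; have [hP hU] := fwd Wb; apply/le_anti/andP; split.
    exact: (upper hP hU).1.
  by rewrite ge_max L1 L2.
Qed.
End Main.

Lemma affine_fin (D : set Cn) (f : Cn -> C) (c : R) : (0 < n)%N -> D 0 -> (0 < c)%R ->
  holo_on D f -> (beta D f < +oo)%E ->
  (beta D (fun w => (rC c * (f w - f 0))%R) < +oo)%E.
Proof.
move=> n0 D0 c0 Hf hb; have [E _] := fin_of _ (beta_ge0 D f n0 D0) hb.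
apply: le_lt_trans (beta_affine D f _ c0 Hf) _.
by rewrite E -EFinM ltry.
Qed.

Lemma bloch1 (D : set Cn) : bloch D (fun _ => 1).
Proof.
split; first exact: holo_const.
by apply: le_lt_trans (beta_const D 1) _; rewrite ltry.
Qed.

Lemma bloch_affine (D : set Cn) (f : Cn -> C) (c : R) : (0 < n)%N -> D 0 ->
  bloch D f -> (0 < c)%R -> bloch D (fun w => (rC c * (f w - f 0))%R).
Proof.
move=> n0 D0 [Hf hb] c0; split; first exact: holo_affine.
exact: affine_fin.
Qed.

Lemma lbloch1 (D : set Cn) : little_bloch D (fun _ => 1).
Proof.
split; first exact: bloch1.
move=> e e0; exists 1; split => // z _ _.
by apply: le_lt_trans (Qf_const D 1 z) _; rewrite lte_fin.
Qed.

Lemma lbloch_affine (D : set Cn) (f : Cn -> C) (c : R) : (0 < n)%N -> D 0 ->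
  little_bloch D f -> (0 < c)%R -> little_bloch D (fun w => (rC c * (f w - f 0))%R).
Proof.
move=> n0 D0 [Bf Vf] c0; split; first exact: bloch_affine.
move=> e e0; have [d [d0 Hd]] := Vf (e / c) (divr_gt0 e0 c0).
exists d; split => // z Dz Hz.
have hq := Hd z Dz Hz.
have [E q0] := fin_of _ (Qf_ge0 D f z n0) (lt_le_trans hq (leey _)).
apply: le_lt_trans (Qf_affine D f z c c0 (Bf.1 z Dz)) _.
rewrite E -EFinM lte_fin; rewrite E lte_fin in hq.
by rewrite mulrC -ltr_pdivlMr.
Qed.
End Aux.

Theorem theorem3p2 (R : realType) (n : nat) (D : set 'rV[R[i]]_n)
    (mu : 'rV[R[i]]_n -> R) (psi : 'rV[R[i]]_n -> R[i])
    (phi : 'rV[R[i]]_n -> 'rV[R[i]]_n) :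
  (0 < n)%N ->
  domain D -> cbounded_set D -> homogeneous D -> D 0 ->
  weight D mu -> holo_on D psi -> holo_self_map D phi ->
  ((Wbounded D (bloch D) mu psi phi <->
      (Hinf D mu psi /\ (upsilon D mu psi phi < +oo)%E)) /\
   (Wbounded D (bloch D) mu psi phi ->
      Wnorm D (bloch D) mu psi phi
        = maxe (Hinf_norm D mu psi) (upsilon D mu psi phi)))
  /\
  ((Wbounded D (little_bloch D) mu psi phi <->
      (Hinf D mu psi /\ (upsilon0 D mu psi phi < +oo)%E)) /\
   (Wbounded D (little_bloch D) mu psi phi ->
      Wnorm D (little_bloch D) mu psi phi
        = maxe (Hinf_norm D mu psi) (upsilon0 D mu psi phi))).
Proof.
move=> n0 _ _ _ D0 [_ Hmu] Hpsi Hphi; split.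
- apply: (main_gen _ _ _ _ _ _ (bloch D) n0 D0 Hmu Hpsi Hphi).
  + by move=> f [].
  + exact: bloch1.
  + by move=> f c Bf c0; apply: bloch_affine.
- apply: (main_gen _ _ _ _ _ _ (little_bloch D) n0 D0 Hmu Hpsi Hphi).
  + by move=> f [[]].
  + exact: lbloch1.
  + by move=> f c Bf c0; apply: lbloch_affine.
Qed.
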